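(* The region $$\mathcal{M}=\left\{(S,I)\in(\mathbb{R}_0^+)^2:\ 0\le S\le A,\ 0\le S+I\le\frac{A(\sigma+g+A)}{\sigma+g}\right\}$$ is positively flow-invariant for the impulsive system $$\dot S=S(A-S)-\beta_0 IS,\quad \dot I=\beta_0 IS-(\sigma+g)I\ (t\neq nT),\quad S(nT)=(1-p)S(nT^-),\ I(nT)=I(nT^-),\ n\in\mathbb{N}.$$
   Context: Parameters: $A\in(0,1]$, $\beta_0\ge0$, $\sigma,g\ge0$ with $\sigma+g>0$, $p\in[0,1]$, $T>0$; it is assumed that $S(t)\le A$ for all $t\ge0$. A set $\mathcal{K}$ is positively flow-invariant if every solution starting in $\mathcal{K}$ stays in $\mathcal{K}$ for all $t\ge0$. *)

(* Defs.v *)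
From Stdlib Require Import Reals.
From Coquelicot Require Import Coquelicot.
Open Scope R_scope.

Definition in_M (A sigma g : R) (S I : R) : Prop :=
  0 <= S /\ 0 <= I /\ S <= A /\ 0 <= S + I /\
  S + I <= A * (sigma + g + A) / (sigma + g).

(* (S, I) : R -> R is a solution on [0, +oo) of the impulsive system
     S' = S (A - S) - beta0 I S,   I' = beta0 I S - (sigma + g) I   (t <> nT),
     S(nT) = (1 - p) S(nT^-),      I(nT) = I(nT^-),   n = 1, 2, ...
   Solutions are right-continuous at the impulse times (and at t = 0),
   have left limits at the impulse times, and satisfy the ODE at every
   t > 0 which is not an impulse time. *)
Definition impulsive_solution (A beta0 sigma g p T : R) (S I : R -> R) : Prop :=
  (forall t, 0 < t -> (forall n : nat, t <> INR n * T) ->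
     is_derive S t (S t * (A - S t) - beta0 * I t * S t) /\
     is_derive I t (beta0 * I t * S t - (sigma + g) * I t)) /\
  (forall n : nat,
     filterlim S (at_right (INR n * T)) (locally (S (INR n * T))) /\
     filterlim I (at_right (INR n * T)) (locally (I (INR n * T)))) /\
  (forall n : nat, (1 <= n)%nat ->
     (exists l : R, filterlim S (at_left (INR n * T)) (locally l) /\
                    S (INR n * T) = (1 - p) * l) /\
     filterlim I (at_left (INR n * T)) (locally (I (INR n * T)))).

(* Main.v *)
Require Import Defs.
From Stdlib Require Import Reals Lra Lia ZArith.
From Coquelicot Require Import Coquelicot.
Open Scope R_scope.

Definition rc (f : R -> R) (a : R) : Prop :=
  forall eps, 0 < eps -> exists d, 0 < d /\ forall t, a <= t < a + d -> Rabs (f t - f a) < eps.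

Lemma rc_of_fl f a : filterlim f (at_right a) (locally (f a)) -> rc f a.
Proof.
  intros H eps He.
  specialize (H (fun x => Rabs (x - f a) < eps)).
  destruct H as [d Hd].
  { exists (mkposreal eps He). intros y Hy. exact Hy. }
  exists d. split. apply cond_pos. intros t [H1 H2].
  destruct (Req_dec t a) as [->|Hne].
  - unfold Rminus. rewrite Rplus_opp_r, Rabs_R0. exact He.
  - apply Hd. change (Rabs (t - a) < d). rewrite Rabs_right; lra. lra.
Qed.

Lemma fl_left f b l : filterlim f (at_left b) (locally l) ->
  forall eps, 0 < eps -> exists d, 0 < d /\ forall t, b - d < t < b -> Rabs (f t - l) < eps.
Proof.
  intros H eps He.
  specialize (H (fun x => Rabs (x - l) < eps)).
  destruct H as [d Hd].
  { exists (mkposreal eps He). intros y Hy. exact Hy. }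
  exists d. split. apply cond_pos. intros t [H1 H2].
  apply Hd. change (Rabs (t - b) < d). rewrite Rabs_left; lra. lra.
Qed.

Lemma left_le f g a b l1 l2 c : a < b ->
  filterlim f (at_left b) (locally l1) -> filterlim g (at_left b) (locally l2) ->
  (forall t, a <= t < b -> f t + g t <= c) -> l1 + l2 <= c.
Proof.
  intros Hab Hf Hg H.
  destruct (Rle_dec (l1 + l2) c) as [|Hn]; auto. exfalso.
  set (e := (l1 + l2 - c) / 2).
  assert (He : 0 < e) by (unfold e; lra).
  destruct (fl_left f b l1 Hf e He) as [d1 [Hd1 H1]].
  destruct (fl_left g b l2 Hg e He) as [d2 [Hd2 H2]].
  set (t := b - Rmin (Rmin d1 d2) (b - a) / 2).
  assert (Hm1 : Rmin (Rmin d1 d2) (b - a) <= Rmin d1 d2) by apply Rmin_l.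
  assert (Hm2 : Rmin (Rmin d1 d2) (b - a) <= b - a) by apply Rmin_r.
  assert (Hm3 : Rmin d1 d2 <= d1) by apply Rmin_l.
  assert (Hm4 : Rmin d1 d2 <= d2) by apply Rmin_r.
  assert (Hm5 : 0 < Rmin (Rmin d1 d2) (b - a)) by (repeat apply Rmin_pos; lra).
  specialize (H1 t ltac:(unfold t; lra)). specialize (H2 t ltac:(unfold t; lra)).
  specialize (H t ltac:(unfold t; lra)).
  apply Rabs_def2 in H1. apply Rabs_def2 in H2. unfold e in *. lra.
Qed.

Lemma left_ge f g a b l1 l2 c : a < b ->
  filterlim f (at_left b) (locally l1) -> filterlim g (at_left b) (locally l2) ->
  (forall t, a <= t < b -> c <= f t + g t) -> c <= l1 + l2.
Proof.
  intros Hab Hf Hg H.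
  destruct (Rle_dec c (l1 + l2)) as [|Hn]; auto. exfalso.
  set (e := (c - (l1 + l2)) / 2).
  assert (He : 0 < e) by (unfold e; lra).
  destruct (fl_left f b l1 Hf e He) as [d1 [Hd1 H1]].
  destruct (fl_left g b l2 Hg e He) as [d2 [Hd2 H2]].
  set (t := b - Rmin (Rmin d1 d2) (b - a) / 2).
  assert (Hm1 : Rmin (Rmin d1 d2) (b - a) <= Rmin d1 d2) by apply Rmin_l.
  assert (Hm2 : Rmin (Rmin d1 d2) (b - a) <= b - a) by apply Rmin_r.
  assert (Hm3 : Rmin d1 d2 <= d1) by apply Rmin_l.
  assert (Hm4 : Rmin d1 d2 <= d2) by apply Rmin_r.
  assert (Hm5 : 0 < Rmin (Rmin d1 d2) (b - a)) by (repeat apply Rmin_pos; lra).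
  specialize (H1 t ltac:(unfold t; lra)). specialize (H2 t ltac:(unfold t; lra)).
  specialize (H t ltac:(unfold t; lra)).
  apply Rabs_def2 in H1. apply Rabs_def2 in H2. unfold e in *. lra.
Qed.

Lemma cont_of_derive f x l : is_derive f x l -> continuity_pt f x.
Proof.
  intros H. apply continuity_pt_filterlim. apply (ex_derive_continuous (K:=R_AbsRing) (V:=R_NormedModule)). exists l. exact H.
Qed.

Lemma rc_all (a b : R) (y dy : R -> R) :
  (forall t, a < t < b -> is_derive y t (dy t)) -> rc y a ->
  forall t0, a <= t0 < b -> rc y t0.
Proof.
  intros Hd Ha t0 [H1 H2].
  destruct (Req_dec t0 a) as [->|Hne]; auto.
  pose proof (cont_of_derive _ _ _ (Hd t0 ltac:(lra))) as Hc.
  intros eps He. destruct (Hc eps He) as [alp [Halp Hx]].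
  exists alp. split; auto. intros t [Ht1 Ht2].
  destruct (Req_dec t t0) as [->|Hne2].
  - unfold Rminus. rewrite Rplus_opp_r, Rabs_R0. exact He.
  - apply (Hx t). split. split. exact I. auto. simpl. unfold R_dist. rewrite Rabs_right; lra.
Qed.

Lemma rc_opp f a : rc f a -> rc (fun t => - f t) a.
Proof.
  intros H eps He. destruct (H eps He) as [d [Hd Ht]]. exists d. split; auto.
  intros t Hta. replace (- f t - - f a) with (- (f t - f a)) by ring.
  rewrite Rabs_Ropp. auto.
Qed.

Lemma rc_sum f g c a : rc f a -> rc g a -> rc (fun t => f t + g t + c) a.
Proof.
  intros Hf Hg eps He.
  destruct (Hf (eps/2) ltac:(lra)) as [d1 [Hd1 H1]].
  destruct (Hg (eps/2) ltac:(lra)) as [d2 [Hd2 H2]].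
  exists (Rmin d1 d2). split. apply Rmin_pos; auto.
  intros t [Ht1 Ht2].
  assert (Rmin d1 d2 <= d1) by apply Rmin_l. assert (Rmin d1 d2 <= d2) by apply Rmin_r.
  specialize (H1 t ltac:(lra)). specialize (H2 t ltac:(lra)).
  apply Rabs_def2 in H1. apply Rabs_def2 in H2. apply Rabs_def1; lra.
Qed.

Lemma key (a b : R) (y dy : R -> R) :
  (forall t, a < t < b -> is_derive y t (dy t)) -> rc y a -> y a <= 0 ->
  (forall t0, a <= t0 < b -> exists L d, 0 <= L /\ 0 < d /\
      forall t, t0 < t < t0 + d -> t < b -> 0 < y t -> dy t <= L * y t) ->
  forall t, a <= t < b -> y t <= 0.
Proof.
  intros Hd Ha Hya Hloc t1 Ht1.
  destruct (Rle_dec (y t1) 0) as [|Hpos]; auto. exfalso.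
  apply Rnot_le_lt in Hpos.
  assert (Hat1 : a < t1) by (destruct (Req_dec t1 a); subst; lra).
  set (E := fun x => a <= x <= t1 /\ y x <= 0).
  destruct (completeness E) as [t0 [Hub Hlub]].
  { exists t1. intros x [Hx _]. lra. }
  { exists a. split; lra. }
  assert (Hat0 : a <= t0) by (apply Hub; split; lra).
  assert (Ht0t1 : t0 <= t1) by (apply Hlub; intros x [Hx _]; lra).
  assert (HA : forall t, t0 < t <= t1 -> 0 < y t).
  { intros t Ht. destruct (Rle_dec (y t) 0) as [Hn|Hn].
    - assert (t <= t0) by (apply Hub; split; lra). lra.
    - lra. }
  assert (HB : y t0 <= 0).
  { destruct (Req_dec t0 a) as [->|Hne]; auto.
    destruct (Rle_dec (y t0) 0) as [|Hn]; auto. exfalso. apply Rnot_le_lt in Hn.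
    pose proof (cont_of_derive _ _ _ (Hd t0 ltac:(lra))) as Hc.
    destruct (Hc (y t0) Hn) as [alp [Halp Hx]].
    assert (t0 <= t0 - alp).
    { apply Hlub. intros x [Hx1 Hx2].
      destruct (Rle_dec x (t0 - alp)) as [|Hn2]; auto. exfalso.
      assert (x <= t0) by (apply Hub; split; auto).
      destruct (Req_dec x t0) as [->|Hne3]; [lra|].
      specialize (Hx x). simpl in Hx. unfold R_dist in Hx.
      assert (Rabs (y x - y t0) < y t0).
      { apply Hx. split. split. exact I. auto. rewrite Rabs_left; lra. }
      apply Rabs_def2 in H0. lra. }
    lra. }
  assert (Hlt : t0 < t1) by (destruct (Req_dec t0 t1); subst; lra).
  destruct (Hloc t0 ltac:(lra)) as [L [d [HL [Hdp HLd]]]].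
  set (s := t0 + Rmin d (t1 - t0) / 2).
  assert (Hm1 : Rmin d (t1 - t0) <= d) by apply Rmin_l.
  assert (Hm2 : Rmin d (t1 - t0) <= t1 - t0) by apply Rmin_r.
  assert (Hm3 : 0 < Rmin d (t1 - t0)) by (apply Rmin_pos; lra).
  assert (Hs1 : t0 < s) by (unfold s; lra).
  assert (Hs2 : s < t0 + d) by (unfold s; lra).
  assert (Hs3 : s <= t1) by (unfold s; lra).
  set (z := fun t => y t * exp (- L * t)).
  set (dz := fun t => dy t * exp (- L * t) + y t * (- L * exp (- L * t))).
  assert (Hdz : forall x, a < x < b -> is_derive z x (dz x)).
  { intros x Hx. unfold z, dz.
    assert (He : is_derive (fun t => exp (- L * t)) x (- L * exp (- L * x))).
    { auto_derive; auto. ring. }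
    apply (is_derive_mult (K:=R_AbsRing) y (fun t => exp (- L * t))); auto.
    intros; apply Rmult_comm. }
  assert (Hmono : forall t, t0 < t < s -> z s <= z t).
  { intros t Ht.
    destruct (MVT_gen z t s dz) as [c [Hc Heq]].
    - intros x Hx. rewrite Rmin_left in Hx by lra. rewrite Rmax_right in Hx by lra.
      apply Hdz. lra.
    - intros x Hx. rewrite Rmin_left in Hx by lra. rewrite Rmax_right in Hx by lra.
      apply (cont_of_derive _ _ _ (Hdz x ltac:(lra))).
    - rewrite Rmin_left in Hc by lra. rewrite Rmax_right in Hc by lra.
      assert (dz c <= 0).
      { unfold dz.
        assert (0 < exp (- L * c)) by apply exp_pos.
        assert (0 < y c) by (apply HA; lra).
        assert (dy c <= L * y c) by (apply HLd; lra).
        replace (dy c * exp (- L * c) + y c * (- L * exp (- L * c)))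
          with ((dy c - L * y c) * exp (- L * c)) by ring.
        assert ((L * y c - dy c) * exp (- L * c) >= 0).
        { apply Rle_ge, Rmult_le_pos; lra. }
        lra. }
      assert (dz c * (s - t) <= 0).
      { assert ((- dz c) * (s - t) >= 0) by (apply Rle_ge, Rmult_le_pos; lra). lra. }
      lra. }
  set (m := z s * exp (L * t0)).
  assert (Hzs : 0 < z s).
  { unfold z. apply Rmult_lt_0_compat. apply HA; lra. apply exp_pos. }
  assert (Hm : 0 < m) by (unfold m; apply Rmult_lt_0_compat; auto; apply exp_pos).
  assert (Hyb : forall t, t0 < t < s -> m <= y t).
  { intros t Ht. specialize (Hmono t Ht). unfold m.
    assert (exp (L * t0) <= exp (L * t)).
    { destruct (Req_dec L 0) as [->|HL0].
      - rewrite !Rmult_0_l. lra.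
      - left. apply exp_increasing. apply Rmult_lt_compat_l; lra. }
    assert (y t = z t * exp (L * t)).
    { unfold z. rewrite Rmult_assoc, <- exp_plus.
      replace (- L * t + L * t) with 0 by ring. rewrite exp_0. ring. }
    rewrite H0.
    apply Rle_trans with (z s * exp (L * t)).
    - apply Rmult_le_compat_l; lra.
    - apply Rmult_le_compat_r. left; apply exp_pos. exact Hmono. }
  destruct (rc_all a b y dy Hd Ha t0 ltac:(lra) m Hm) as [d' [Hd' Hrc]].
  set (t := t0 + Rmin d' (s - t0) / 2).
  assert (Rmin d' (s - t0) <= d') by apply Rmin_l.
  assert (Rmin d' (s - t0) <= s - t0) by apply Rmin_r.
  assert (0 < Rmin d' (s - t0)) by (apply Rmin_pos; lra).
  specialize (Hrc t ltac:(unfold t; lra)).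
  specialize (Hyb t ltac:(unfold t; lra)).
  apply Rabs_def2 in Hrc. lra.
Qed.

Lemma deriv_ext (f : R -> R) (x l l' : R) : is_derive f x l -> l = l' -> is_derive f x l'.
Proof. intros H ->; exact H. Qed.

Lemma find_n T t : 0 < T -> 0 <= t -> exists n : nat, INR n * T <= t < INR (S n) * T.
Proof.
  intros hT ht. destruct (archimed (t / T)) as [H1 H2].
  assert (0 <= t / T) by (unfold Rdiv; apply Rmult_le_pos; [lra| left; apply Rinv_0_lt_compat; lra]).
  assert (Hz : (1 <= up (t / T))%Z).
  { assert (0 < IZR (up (t/T))) by lra. apply lt_IZR in H0. lia. }
  exists (Z.to_nat (up (t / T) - 1)).
  rewrite S_INR, INR_IZR_INZ, Z2Nat.id by lia. rewrite minus_IZR.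
  assert (t = (t / T) * T) by (field; lra).
  split.
  - rewrite H0 at 2. apply Rmult_le_compat_r; lra.
  - rewrite H0 at 1. apply Rmult_lt_compat_r; lra.
Qed.

Theorem lemma1 (A beta0 sigma g p T : R)
  (hA : 0 < A) (hA1 : A <= 1) (hb : 0 <= beta0)
  (hs : 0 <= sigma) (hg : 0 <= g) (hsg : 0 < sigma + g)
  (hp0 : 0 <= p) (hp1 : p <= 1) (hT : 0 < T)
  (S I : R -> R)
  (hsol : impulsive_solution A beta0 sigma g p T S I)
  (hSA : forall t, 0 <= t -> S t <= A)
  (h0 : in_M A sigma g (S 0) (I 0)) :
  forall t, 0 <= t -> in_M A sigma g (S t) (I t).
Proof.
  destruct hsol as [hder [hrc hjump]].
  set (K := A * (sigma + g + A) / (sigma + g)).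
  assert (HK : K * (sigma + g) = A * (sigma + g + A)) by (unfold K; field; lra).
  set (P := fun x => 0 <= S x /\ 0 <= I x /\ S x + I x <= K).
  assert (step : forall n : nat, P (INR n * T) ->
            (forall t, INR n * T <= t < INR (Datatypes.S n) * T -> P t) /\ P (INR (Datatypes.S n) * T)).
  { intros n [P1 [P2 P3]].
    set (a := INR n * T). set (b := INR (Datatypes.S n) * T).
    assert (Ha0 : 0 <= a) by (unfold a; apply Rmult_le_pos; [apply pos_INR|lra]).
    assert (Hab : b = a + T) by (unfold a, b; rewrite S_INR; ring).
    assert (Hd : forall t, a < t < b ->
       is_derive S t (S t * (A - S t) - beta0 * I t * S t) /\
       is_derive I t (beta0 * I t * S t - (sigma + g) * I t)).
    { intros t Ht. apply hder. lra. intros m Hm. unfold a, b in *.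
      assert (E1 : INR n < INR m) by (apply (Rmult_lt_reg_r T); lra).
      assert (E2 : INR m < INR (Datatypes.S n)) by (apply (Rmult_lt_reg_r T); lra).
      apply INR_lt in E1. apply INR_lt in E2. lia. }
    assert (rcS : rc S a) by (apply rc_of_fl; apply hrc).
    assert (rcI : rc I a) by (apply rc_of_fl; apply hrc).
    assert (rcSa : forall t0, a <= t0 < b -> rc S t0)
      by (apply (rc_all a b S (fun t => S t * (A - S t) - beta0 * I t * S t)); auto;
          intros; apply Hd; auto).
    assert (rcIa : forall t0, a <= t0 < b -> rc I t0)
      by (apply (rc_all a b I (fun t => beta0 * I t * S t - (sigma + g) * I t)); auto;
          intros; apply Hd; auto).
    assert (HI : forall t, a <= t < b -> - I t <= 0).
    { apply (key a b (fun t => - I t) (fun t => - (beta0 * I t * S t - (sigma + g) * I t))).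
      - intros t Ht. apply (is_derive_opp (K:=R_AbsRing) (V:=R_NormedModule) I). apply Hd; auto.
      - apply rc_opp; auto.
      - unfold a; lra.
      - intros t0 Ht0. destruct (rcSa t0 Ht0 1 ltac:(lra)) as [d [Hdp Hdd]].
        exists (beta0 * (Rabs (S t0) + 1) + (sigma + g)), d.
        split. { assert (0 <= Rabs (S t0)) by apply Rabs_pos. nra. }
        split; auto. intros t Ht Htb Hy.
        specialize (Hdd t ltac:(lra)). apply Rabs_def2 in Hdd.
        assert (S t0 <= Rabs (S t0)) by apply RRle_abs.
        assert (beta0 * S t <= beta0 * (Rabs (S t0) + 1)) by (apply Rmult_le_compat_l; lra).
        replace (- (beta0 * I t * S t - (sigma + g) * I t)) with ((beta0 * S t - (sigma + g)) * (- I t)) by ring.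
        apply Rmult_le_compat_r; lra. }
    assert (HS : forall t, a <= t < b -> - S t <= 0).
    { apply (key a b (fun t => - S t) (fun t => - (S t * (A - S t) - beta0 * I t * S t))).
      - intros t Ht. apply (is_derive_opp (K:=R_AbsRing) (V:=R_NormedModule) S). apply Hd; auto.
      - apply rc_opp; auto.
      - unfold a; lra.
      - intros t0 Ht0. destruct (rcSa t0 Ht0 1 ltac:(lra)) as [d [Hdp Hdd]].
        exists (A + Rabs (S t0) + 1), d.
        split. { assert (0 <= Rabs (S t0)) by apply Rabs_pos. lra. }
        split; auto. intros t Ht Htb Hy.
        specialize (Hdd t ltac:(lra)). apply Rabs_def2 in Hdd.
        assert (- S t0 <= Rabs (S t0)) by (rewrite <- Rabs_Ropp; apply RRle_abs).
        assert (0 <= I t) by (assert (- I t <= 0) by (apply HI; lra); lra).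
        assert (0 <= beta0 * I t) by (apply Rmult_le_pos; lra).
        replace (- (S t * (A - S t) - beta0 * I t * S t)) with ((A - S t - beta0 * I t) * (- S t)) by ring.
        apply Rmult_le_compat_r; lra. }
    assert (HN : forall t, a <= t < b -> S t + I t + - K <= 0).
    { apply (key a b (fun t => S t + I t + - K)
               (fun t => (S t * (A - S t) - beta0 * I t * S t) + (beta0 * I t * S t - (sigma + g) * I t))).
      - intros t Ht. destruct (Hd t Ht) as [D1 D2].
        apply (deriv_ext _ _ (plus (plus (S t * (A - S t) - beta0 * I t * S t)
                                           (beta0 * I t * S t - (sigma + g) * I t)) 0)).
        + apply (is_derive_plus (K:=R_AbsRing) (V:=R_NormedModule) (fun t => S t + I t) (fun _ => - K)).
          * apply (is_derive_plus (K:=R_AbsRing) (V:=R_NormedModule) S I); auto.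
          * apply (is_derive_const (K:=R_AbsRing) (V:=R_NormedModule)).
        + simpl. unfold plus; simpl. ring.
      - apply rc_sum; auto.
      - unfold a; lra.
      - intros t0 Ht0. exists 0, 1. split. lra. split. lra.
        intros t Ht Htb Hy.
        assert (0 <= S t) by (assert (- S t <= 0) by (apply HS; lra); lra).
        assert (S t <= A) by (apply hSA; lra).
        assert ((sigma + g) * (S t + I t) > (sigma + g) * K)
          by (apply Rmult_gt_compat_l; lra).
        assert (S t * (A - S t) <= A * A) by nra.
        assert (S t * (A - S t) - (sigma + g) * I t <= 0) by nra.
        lra. }
    assert (core : forall t, a <= t < b -> P t).
    { intros t Ht. specialize (HI t Ht). specialize (HS t Ht). specialize (HN t Ht).
      unfold P. lra. }
    split. exact core.
    destruct (hjump (Datatypes.S n) ltac:(lia)) as [[l [Hl Hsl]] HlI].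
    fold b in Hl, Hsl, HlI.
    assert (Hab' : a < b) by lra.
    assert (l0 : 0 <= l + 0).
    { apply (left_ge S (fun _ => 0) a b); auto. apply filterlim_const.
      intros t Ht. destruct (core t Ht) as [? [? ?]]. lra. }
    assert (I0 : 0 <= I b + 0).
    { apply (left_ge I (fun _ => 0) a b); auto. apply filterlim_const.
      intros t Ht. destruct (core t Ht) as [? [? ?]]. lra. }
    assert (N0 : l + I b <= K).
    { apply (left_le S I a b); auto.
      intros t Ht. destruct (core t Ht) as [? [? ?]]. lra. }
    unfold P. rewrite Hsl. split; [|split].
    - apply Rmult_le_pos; lra.
    - lra.
    - assert (p * l >= 0) by (apply Rle_ge, Rmult_le_pos; lra). lra. }
  assert (all : forall n : nat, P (INR n * T)).
  { induction n.
    - simpl. rewrite Rmult_0_l. destruct h0 as [? [? [? [? Hk]]]]. unfold P. fold K in Hk. lra.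
    - apply (step n IHn). }
  intros t ht. destruct (find_n T t hT ht) as [n Hn].
  destruct (proj1 (step n (all n)) t Hn) as [? [? ?]].
  assert (S t <= A) by auto.
  unfold in_M. fold K. repeat split; lra.
Qed.
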